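(* The identity matrix $\mathbb{1}_N$ (the barycenter of the set $\mathcal I$ of Ising matrices) is a fixed point of every affine bijection $\sigma:\mathcal{G}_N\to\mathcal{G}_N$.
   Context: $\mathcal{G}_N$ is the set of real symmetric positive semi-definite $N\times N$ matrices with unit diagonal; $\mathcal{I}$ is the set of matrices $\mathbf{s}\mathbf{s}^\top$ with $\mathbf{s}\in\{\pm1\}^N$. *)

(* Defs.v *)
From mathcomp Require Import all_boot all_order all_algebra.
From mathcomp Require Import reals.
Set Implicit Arguments. Unset Strict Implicit. Unset Printing Implicit Defensive.
Import Order.TTheory GRing.Theory Num.Theory.
Local Open Scope ring_scope.

Definition psd (R : realType) (N : nat) (A : 'M[R]_N) : Prop :=
  forall x : 'cV[R]_N, 0 <= (x^T *m A *m x) 0 0.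

Definition elliptope (R : realType) (N : nat) (A : 'M[R]_N) : Prop :=
  A^T = A /\ psd A /\ (forall i : 'I_N, A i i = 1).

Definition ising (R : realType) (N : nat) (A : 'M[R]_N) : Prop :=
  exists s : 'cV[R]_N, (forall i, s i 0 = 1 \/ s i 0 = -1) /\ A = s *m s^T.

(* sigma : G_N -> G_N is an affine bijection (represented as a function on
   all matrices, whose restriction to G_N is considered). *)
Definition affine_bijection_on_elliptope (R : realType) (N : nat)
  (sigma : 'M[R]_N -> 'M[R]_N) : Prop :=
  (forall A, elliptope A -> elliptope (sigma A)) /\
  (forall A B, elliptope A -> elliptope B -> sigma A = sigma B -> A = B) /\
  (forall B, elliptope B -> exists2 A, elliptope A & sigma A = B) /\
  (forall A B (t : R), elliptope A -> elliptope B -> 0 <= t -> t <= 1 ->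
     sigma (t *: A + (1 - t) *: B) = t *: sigma A + (1 - t) *: sigma B).

(* Main.v *)
Require Import Defs.
From mathcomp Require Import all_boot all_order all_algebra.
From mathcomp Require Import reals ring lra zify.
Set Implicit Arguments. Unset Strict Implicit. Unset Printing Implicit Defensive.
Import Order.TTheory GRing.Theory Num.Theory.
Local Open Scope ring_scope.
Section H.
Variables (R : realType) (N : nat).
Implicit Types (M A B C : 'M[R]_N) (s x y z : 'cV[R]_N).

Definition bf M x y := (x^T *m M *m y) 0 0.

Lemma bfE M x y : bf M x y = \sum_k \sum_l x k 0 * M k l * y l 0.
Proof.
rewrite /bf mxE exchange_big; apply: eq_bigr => l _.
rewrite mxE mulr_suml; apply: eq_bigr => k _; by rewrite !mxE.
Qed.

Lemma bfDl M x y z : bf M (x + y) z = bf M x z + bf M y z.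
Proof. by rewrite /bf linearD /= !mulmxDl mxE. Qed.
Lemma bfZl M a x y : bf M (a *: x) y = a * bf M x y.
Proof. by rewrite /bf linearZ /= -!scalemxAl mxE. Qed.
Lemma bfDr M x y z : bf M z (x + y) = bf M z x + bf M z y.
Proof. by rewrite /bf !mulmxDr mxE. Qed.
Lemma bfZr M a x y : bf M y (a *: x) = a * bf M y x.
Proof. by rewrite /bf -!scalemxAr mxE. Qed.
Lemma bfDm M1 M2 x y : bf (M1 + M2) x y = bf M1 x y + bf M2 x y.
Proof. by rewrite /bf mulmxDr mulmxDl mxE. Qed.
Lemma bfZm a M x y : bf (a *: M) x y = a * bf M x y.
Proof. by rewrite /bf -scalemxAr -scalemxAl mxE. Qed.
Lemma bfNm M x y : bf (- M) x y = - bf M x y.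
Proof. by rewrite -scaleN1r bfZm mulN1r. Qed.
Lemma bf_delta M k l : bf M (delta_mx k 0) (delta_mx l 0) = M k l.
Proof. by rewrite /bf trmx_delta -rowE -colE !mxE. Qed.
Lemma bf_deltal M k y : bf M (delta_mx k 0) y = (M *m y) k 0.
Proof. by rewrite /bf trmx_delta -mulmxA -rowE !mxE. Qed.
Lemma bf_sym M x y : M^T = M -> bf M x y = bf M y x.
Proof.
move=> HM; rewrite !bfE exchange_big; apply: eq_bigr => k _.
apply: eq_bigr => l _. rewrite -{1}HM mxE; ring.
Qed.
Lemma dotE x y : (x^T *m y) 0 0 = \sum_k x k 0 * y k 0.
Proof. by rewrite mxE; apply: eq_bigr => k _; rewrite mxE. Qed.
Lemma bf_rank1 s x y : bf (s *m s^T) x y = (x^T *m s) 0 0 * (s^T *m y) 0 0.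
Proof. by rewrite /bf !mulmxA -(mulmxA _ _ y) [in LHS]mxE big_ord1. Qed.
Lemma bf1 x : bf 1%:M x x = \sum_k x k 0 ^+ 2.
Proof. by rewrite /bf mulmx1 dotE; apply: eq_bigr => k _; rewrite expr2. Qed.

Lemma sum_delta (F : 'I_N -> R) i : \sum_l F l * (l == i)%:R = F i.
Proof.
rewrite (bigD1 i) //= eqxx mulr1 big1 ?addr0 // => l /negbTE ->; by rewrite mulr0.
Qed.


Lemma G_entry B k l (x : 'cV[R]_N) : elliptope B ->
  2 * (x k 0 * B k l * x l 0) <= x k 0 ^+ 2 + x l 0 ^+ 2.
Proof.
move=> [HT [Hp Hd]].
have Hs : B l k = B k l by rewrite -{1}HT mxE.
have := Hp (x l 0 *: delta_mx k 0 - x k 0 *: delta_mx l 0).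
rewrite -/(bf _ _ _) bfDl bfDr bfDr -!scaleN1r !bfZl !bfZr !bf_delta Hs !Hd.
move=> H; nra.
Qed.

Lemma G_bound B x : elliptope B -> bf B x x <= N%:R * bf 1%:M x x.
Proof.
move=> HB; rewrite bfE bf1.
have H2 : 2 * (\sum_k \sum_l x k 0 * B k l * x l 0) <=
   \sum_k \sum_l (x k 0 ^+ 2 + x l 0 ^+ 2).
  rewrite mulr_sumr; apply: ler_sum => k _; rewrite mulr_sumr; apply: ler_sum => l _.
  exact: (G_entry k l x HB).
have E : \sum_k \sum_l (x k 0 ^+ 2 + x l 0 ^+ 2) =
   2 * (N%:R * \sum_k x k 0 ^+ 2).
  rewrite (eq_bigr (fun k => x k 0 ^+ 2 *+ N + \sum_l x l 0 ^+ 2)); last first.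
    by move=> k _; rewrite big_split sumr_const card_ord.
 
  rewrite big_split /= sumr_const card_ord sumrMnl.
  have Hn : forall y : R, y *+ N = y * N%:R by move=> y; rewrite mulr_natr.
  rewrite Hn; ring.
rewrite E in H2. lra.
Qed.

Definition sv (f : {ffun 'I_N -> bool}) : 'cV[R]_N := \col_m (if f m then -1 else 1).
Lemma svE f m : sv f m 0 = if f m then -1 else 1.
Proof. by rewrite mxE. Qed.
Lemma sv2 f m : sv f m 0 * sv f m 0 = 1.
Proof. rewrite mxE; case: (f m); ring. Qed.
Lemma svTsv f : ((sv f)^T *m sv f) 0 0 = N%:R.
Proof. by rewrite dotE (eq_bigr (fun _ => 1)) ?sumr_const ?card_ord // => k _; rewrite sv2. Qed.

Lemma ising_G (s : 'cV[R]_N) : (forall m, s m 0 * s m 0 = 1) -> elliptope (s *m s^T).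
Proof.
move=> Hs; split; [|split].
- by rewrite trmx_mul trmxK.
- move=> x; rewrite -/(bf _ _ _) bf_rank1.
  have -> : (x^T *m s) 0 0 = (s^T *m x) 0 0.
    by rewrite !dotE; apply: eq_bigr => k _; rewrite mulrC.
  rewrite -expr2; exact: sqr_ge0.
- by move=> i; rewrite mxE big_ord1 mxE Hs.
Qed.

Definition flip (k : 'I_N) (f : {ffun 'I_N -> bool}) : {ffun 'I_N -> bool} :=
  [ffun m => if m == k then ~~ f m else f m].
Lemma flipK k : involutive (flip k).
Proof. move=> f; apply/ffunP => m; rewrite !ffunE; case: eqP => // _; exact: negbK. Qed.

Definition K : R := #|{: {ffun 'I_N -> bool}}|%:R.

Lemma sv_sum k l : \sum_f sv f k 0 * sv f l 0 = (k == l)%:R * K.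
Proof.
case: (eqVneq k l) => [<-|Hkl].
  by rewrite (eq_bigr (fun _ => 1)) ?sumr_const ?mul1r // => f _; rewrite sv2.
rewrite mul0r.
set S := (X in X = 0).
have : S = - S.
  rewrite /S {1}(reindex_inj (can_inj (flipK k))) -sumrN; apply: eq_bigr => f _.
  have Hlk : (l == k) = false by rewrite eq_sym (negbTE Hkl).
  rewrite !mxE !ffunE eqxx Hlk.
  by case: (f k); case: (f l); rewrite /=; ring.
lra.
Qed.

Lemma K_gt0 : 0 < K.
Proof. rewrite /K ltr0n; apply/card_gt0P; by exists [ffun=> false]. Qed.

Lemma sum_bf A : (forall i, A i i = 1) -> \sum_f bf A (sv f) (sv f) = K * N%:R.
Proof.
move=> Hd.
under eq_bigr do rewrite bfE.
rewrite exchange_big /=.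
rewrite (eq_bigr (fun k => K)); first by rewrite sumr_const card_ord mulr_natr.
move=> k _; rewrite exchange_big /=.
rewrite (eq_bigr (fun l => (A k l * K) * (l == k)%:R)).
  by rewrite (sum_delta (fun l => A k l * K)) Hd mul1r.
move=> l _.
rewrite (eq_bigr (fun f => A k l * (sv f k 0 * sv f l 0))); last by move=> f _; ring.
by rewrite -mulr_sumr sv_sum eq_sym; ring.
Qed.

Lemma psd_ker C x y : C^T = C -> psd C -> bf C x x = 0 -> bf C y x = 0.
Proof.
move=> HT Hp H0.
set b := bf C y x; set c := bf C y y.
have Hc : 0 <= c by exact: Hp.
have Ht : forall t, 0 <= 2 * t * b + t ^+ 2 * c.
  move=> t; have := Hp (x + t *: y).
  rewrite -/(bf _ _ _) bfDl !bfDr !bfZl !bfZr H0 (bf_sym _ _ HT) -/b -/c.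
  move=> H; nra.
have Hu : 0 < c + 1 by lra.
set t := - b / (c + 1).
have Htu : t * (c + 1) = - b by rewrite /t divfK // gt_eqF.
have := Ht t; nra.
Qed.
End H.
Arguments sv {R N} f.
Arguments K {R N}.

Lemma delta_dot (R : realType) (N : nat) (k : 'I_N) (s : 'cV[R]_N) :
  ((delta_mx k 0 : 'cV[R]_N)^T *m s) 0 0 = s k 0.
Proof. by rewrite trmx_delta -rowE mxE. Qed.

Theorem lemma6 (R : realType) (N : nat) (sigma : 'M[R]_N -> 'M[R]_N) :
  affine_bijection_on_elliptope sigma -> sigma 1%:M = 1%:M.
Proof.
move=> [Hmap [_ [Hsurj Haff]]].
have G1 : elliptope (1%:M : 'M[R]_N).
  split; first by rewrite trmx1.
  split; last by move=> i; rewrite mxE eqxx.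
  move=> x; rewrite -/(bf _ _ _) bf1; apply: sumr_ge0 => k _; exact: sqr_ge0.
case: (leqP N 1) => HN.
  have [_ [_ Hd]] := Hmap _ G1.
  apply/matrixP => i j.
  have -> : j = i by apply: val_inj; move: (ltn_ord i) (ltn_ord j) => /= ? ?; lia.
  by rewrite Hd mxE eqxx.
set n : R := N%:R.
have Hn : 2 <= n by rewrite /n (ler_nat R 2 N).
have Hn0 : n != 0 by apply/eqP; lra.
have Hnn : n * n^-1 = 1 by rewrite mulfV.
set t := 1 - n^-1.
have Ht1 : 1 - t = n^-1 by rewrite /t; ring.
have tpos : 0 < t by rewrite /t; nra.
have tle1 : t <= 1 by rewrite /t; nra.
pose Pc (A : 'M[R]_N) := forall B, elliptope B ->
  exists2 C, elliptope C & A = t *: C + (1 - t) *: B.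
have P1 : Pc 1%:M.
  move=> B [HBT [HBp HBd]].
  have Hn1 : n - 1 != 0 by apply/eqP; lra.
  exists ((n - 1)^-1 *: (n *: 1%:M - B)).
    split.
      apply/matrixP => i j; rewrite !mxE.
      by rewrite -{1}HBT mxE eq_sym.
    split.
      move=> x; rewrite -/(bf _ _ _) bfZm bfDm bfNm bfZm.
      apply: mulr_ge0; first by rewrite invr_ge0; lra.
      rewrite subr_ge0; exact: G_bound.
    by move=> i; rewrite !mxE eqxx HBd mulr1 mulVf.
  apply/matrixP => i j; rewrite !mxE Ht1 /t; field; by rewrite ?Hn0 ?Hn1.
have P2 : forall A, elliptope A -> Pc A -> Pc (sigma A).
  move=> A HA PA B' HB'.
  have [B0 HB <-] := Hsurj _ HB'.
  have [C HC ->] := PA B0 HB.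
  exists (sigma C); first exact: Hmap.
  exact: (Haff C B0 t HC HB (ltW tpos) tle1).
have P3 : forall A, elliptope A -> Pc A -> A = 1%:M.
  move=> A [HAT [HAp HAd]] PA.
  have Ha : forall f, exists2 C, elliptope C & A = t *: C + (1 - t) *: (sv f *m (sv f)^T).
    by move=> f; apply: PA; apply: ising_G => m; exact: sv2.
  have Hnsq : (1 - t) * (n * n) = n by rewrite Ht1 mulrA mulVf // mul1r.
  have Hge : forall f, n <= bf A (sv f) (sv f).
    move=> f; have [C [HCT [HCp _]] ->] := Ha f.
    rewrite bfDm !bfZm bf_rank1 svTsv -/n Hnsq.
    have := HCp (sv f); rewrite -/(bf _ _ _) => ?; nra.
  have Heq : forall f, bf A (sv f) (sv f) = n.
    have Hs := sum_bf HAd.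
    have Hsum : \sum_f (bf A (sv f) (sv f) - n) = 0.
      by rewrite sumrB Hs sumr_const /K mulr_natl subrr.
    move=> f.
    have Hp : forall f, predT f -> 0 <= bf A (sv f) (sv f) - n.
      by move=> g _; rewrite subr_ge0.
    have := @psumr_eq0P _ _ _ _ Hp Hsum f isT.
    lra.
  have Hcol : forall f k, \sum_l A k l * sv f l 0 = sv f k 0.
    move=> f k; have [C [HCT [HCp _]] EA] := Ha f.
    have HC0 : bf C (sv f) (sv f) = 0.
      have := Heq f; rewrite {1}EA bfDm !bfZm bf_rank1 svTsv -/n Hnsq => H.
      have : t * bf C (sv f) (sv f) = 0 by lra.
      by move/eqP; rewrite mulf_eq0 (gt_eqF tpos) /= => /eqP.
    have H0 := psd_ker (delta_mx k 0) HCT HCp HC0.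
    have E1 : bf A (delta_mx k 0) (sv f) = sv f k 0.
      rewrite EA bfDm !bfZm H0 bf_rank1 delta_dot svTsv Ht1 mulr0 add0r.
      by rewrite mulrCA mulVf // mulr1.
    by rewrite bf_deltal mxE in E1.
  apply/matrixP => k i; rewrite mxE.
  pose f0 : {ffun 'I_N -> bool} := [ffun=> false].
  have H0 := Hcol f0 k.
  have H1 := Hcol (flip i f0) k.
  have e0 : forall m : 'I_N, sv f0 m 0 = 1 :> R by move=> m; rewrite svE /f0 ffunE.
  have e1 : forall m : 'I_N, sv (flip i f0) m 0 = 1 - 2 * (m == i)%:R :> R.
    by move=> m; rewrite svE /flip /f0 !ffunE; case: eqP => _ /=; ring.
  rewrite (eq_bigr (fun l => A k l)) in H0; last by move=> l _; rewrite e0 mulr1.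
  rewrite (eq_bigr (fun l => A k l - (A k l * 2) * (l == i)%:R)) in H1; last first.
    by move=> l _; rewrite e1; ring.
  rewrite sumrB (sum_delta (fun l => A k l * 2) i) H0 e1 in H1.
  rewrite e0 in H1; lra.
exact: (P3 _ (Hmap _ G1) (P2 _ G1 P1)).
Qed.
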